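(* Let $n\ge2$, $N\ge1$, $L>0$, $h=L/N$. There is a constant $C>0$ independent of $h$ such that the following holds. Let $\Phi=(\Phi_{ij})_{i,j=1}^{n-1}$ be a matrix of edge-centered grid functions such that at every edge point $\ell+\frac12$ the matrix $(\Phi_{ij,\ell+\frac12})$ is symmetric positive definite, and let $\lambda_{\min}>0$ be the minimum over $\ell=1,\dots,N$ of the eigenvalues of $(\Phi_{ij,\ell+\frac12})_{i,j}$. Let $\phi\in\mathring{\mathcal C}^{n-1}_{\rm per}$ satisfy $\|\phi\|_{L^\infty}:=\max_{i,\ell}|\phi_{i,\ell}|\le M$. Then $$\|\mathcal L_\Phi^{-1}\phi\|_{L^\infty}\le\frac{CM}{\lambda_{\min}}\,h^{-\frac12}(n-1)^{\frac12}.$$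
   Context: Grid on the torus $[0,L]$ with $N$ intervals, $h=L/N$: cell-centered grid functions are $N$-periodic sequences $(f_\ell)$, edge-centered ones $N$-periodic sequences $(f_{\ell+\frac12})$. $(d_h\phi)_\ell=(\phi_{\ell+\frac12}-\phi_{\ell-\frac12})/h$, $(D_hf)_{\ell+\frac12}=(f_{\ell+1}-f_\ell)/h$. $\mathring{\mathcal C}^{n-1}_{\rm per}$ denotes $(n-1)$-tuples $f=(f_1,\dots,f_{n-1})$ of cell-centered grid functions with $\sum_{\ell=1}^Nf_{i,\ell}=0$ for each $i$. The operator $\mathcal L_\Phi:\mathring{\mathcal C}^{n-1}_{\rm per}\to\mathring{\mathcal C}^{n-1}_{\rm per}$ is $(\mathcal L_\Phi f)_i=-\sum_{j=1}^{n-1}d_h(\Phi_{ij}D_hf_j)$ (products pointwise on edges); it is invertible on $\mathring{\mathcal C}^{n-1}_{\rm per}$, and $\mathcal L_\Phi^{-1}\phi$ denotes the unique $f\in\mathring{\mathcal C}^{n-1}_{\rm per}$ with $\mathcal L_\Phi f=\phi$; $\|f\|_{L^\infty}=\max_{i,\ell}|f_{i,\ell}|$. *)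

(* Defs.v *)
From mathcomp Require Import all_boot all_order all_algebra reals.
Set Implicit Arguments. Unset Strict Implicit. Unset Printing Implicit Defensive.
Import Order.TTheory GRing.Theory Num.Theory.
Local Open Scope ring_scope.

Section Grid.
Variable R : realType.

(* Periodic grid with N cells, indices 0..N-1 (paper: 1..N), wrapping via
   ordS (l+1 mod N) and ord_pred (l-1 mod N).
   A cell-centered grid function is  'I_N -> R  (value f_l);
   an edge-centered grid function is 'I_N -> R, where index l stands for the
   edge point l+1/2.  An (n-1)-tuple of cell functions is 'I_k -> 'I_N -> R. *)

Definition Dh (N : nat) (h : R) (f : 'I_N -> R) : 'I_N -> R :=
  fun l => (f (ordS l) - f l) / h.

Definition dh (N : nat) (h : R) (p : 'I_N -> R) : 'I_N -> R :=
  fun l => (p l - p (ord_pred l)) / h.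

Definition LPhi (k N : nat) (h : R) (Phi : 'I_N -> 'M[R]_k)
    (f : 'I_k -> 'I_N -> R) : 'I_k -> 'I_N -> R :=
  fun i => fun l => - \sum_(j < k) dh h (fun e => Phi e i j * Dh h (f j) e) l.

Definition mean_zero (k N : nat) (f : 'I_k -> 'I_N -> R) : Prop :=
  forall i, \sum_(l < N) f i l = 0.

Definition Linf (k N : nat) (f : 'I_k -> 'I_N -> R) : R :=
  \big[Num.max/0]_(i < k) \big[Num.max/0]_(l < N) `|f i l|.

Definition sym_posdef (k : nat) (A : 'M[R]_k) : Prop :=
  A^T = A /\ forall v : 'cV[R]_k, v != 0 -> 0 < (v^T *m A *m v) 0 0.

Definition is_min_eigenvalue (k N : nat) (Phi : 'I_N -> 'M[R]_k) (lam : R) : Prop :=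
  (exists l : 'I_N, eigenvalue (Phi l) lam) /\
  (forall (l : 'I_N) (mu : R), eigenvalue (Phi l) mu -> lam <= mu).

End Grid.

(* Main.v *)
Require Import Defs.
From mathcomp Require Import all_boot all_order all_algebra reals.
From mathcomp Require Import ring lra complex.
Import Order.TTheory GRing.Theory Num.Theory.
Local Open Scope ring_scope.

Section Spec.
Local Open Scope sesquilinear_scope.
Lemma quad_ge (R : rcfType) k (A : 'M[R]_k) (lam : R) :
  A^T = A -> (forall mu, eigenvalue A mu -> lam <= mu) ->
  forall v : 'rV[R]_k, lam * (v *m v^T) 0 0 <= (v *m A *m v^T) 0 0.
Proof.
move=> tA Hlam v.
pose toC := real_complex R.
have toC_real x : toC x \is Num.real by rewrite complex_real.
have conj_toC x : (toC x)^* = toC x by rewrite conj_Creal.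
set Ac := map_mx toC A.
have Ac_real : Ac \is a realmx by apply/mxOverP => i j; rewrite mxE.
have Ac_sym : Ac \is symmetricmx.
  by rewrite qualifE expr0 scale1r; apply/eqP/matrixP=> i j; rewrite !mxE -{1}tA mxE.
have Ah := realsym_hermsym Ac_sym Ac_real.
have /orthomx_spectralP Aeq := hermitian_normalmx Ah.
have Pu := spectral_unitarymx Ac.
have dreal := hermitian_spectral_diag_real Ah.
move: Aeq Pu dreal; set P := spectralmx Ac; set d := spectral_diag Ac.
move=> Aeq Pu dreal.
rewrite invmx_unitary // in Aeq.
have PP : P *m P^t* = 1%:M by apply/unitarymxP.
have dge j : toC lam <= d 0 j.
  have dj_real : d 0 j \is Num.real by exact: (mxOverP dreal 0 j).
  rewrite -(RRe_real dj_real) lecR; apply: Hlam.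
  rewrite eigenvalue_root_char -(fmorph_root toC) map_char_poly.
  rewrite (_ : _ (complex.Re (d 0 j)) = d 0 j); last exact: RRe_real.
  rewrite -eigenvalue_root_char.
  apply/eigenvalueP; exists (row j P).
    rewrite (_ : map_mx _ A = Ac) // Aeq -!row_mul !mulmxA PP mul1mx row_mul row_diag_mx.
    by rewrite -scalemxAl -rowE.
  apply/eqP => h; have := congr1 (fun X => X *m P^t*) h.
  rewrite -row_mul PP mul0mx row1 => /rowP/(_ j); rewrite !mxE eqxx /=.
  by rewrite eqxx => /eqP; rewrite oner_eq0.
set u := map_mx toC v.
have ut : u^t* = map_mx toC v^T.
  by apply/matrixP => i j; rewrite !mxE conj_toC.
have key1 : toC ((v *m A *m v^T) 0 0) = (u *m Ac *m u^t*) 0 0.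
  by rewrite ut -!map_mxM [RHS]mxE.
have key2 : toC ((v *m v^T) 0 0) = (u *m u^t*) 0 0.
  by rewrite ut -!map_mxM [RHS]mxE.
rewrite -lecR rmorphM /= -/toC key1 key2.
set w := u *m P^t*.
have wt : w^t* = P *m u^t*.
  by rewrite /w trmx_mul map_mxM trmxCK.
have e1 : u *m Ac *m u^t* = w *m diag_mx d *m w^t*.
  by rewrite wt Aeq /w !mulmxA.
have e2 : u *m u^t* = w *m w^t*.
  by rewrite wt /w !mulmxA mulmxKtV.
rewrite e1 e2 !mxE mulr_sumr; apply: ler_sum => j _.
rewrite mul_mx_diag !mxE mulrAC (mulrC _ (d 0 j)).
by apply: ler_wpM2r; [exact: mul_conjC_ge0 | exact: dge].
Qed.
End Spec.
Section G.
Variable R : realType.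

Lemma sbp N (h : R) (u e : 'I_N -> R) :
  \sum_l u l * dh h e l = - \sum_l e l * Dh h u l.
Proof.
have H : \sum_l u l * e (ord_pred l) = \sum_l e l * u (ordS l).
  rewrite (reindex_inj (@ordS_inj N)) /=; apply: eq_bigr => l _.
  by rewrite ordSK mulrC.
rewrite /dh /Dh.
transitivity ((\sum_l u l * e l - \sum_l u l * e (ord_pred l)) / h).
  by rewrite -sumrB mulr_suml; apply: eq_bigr => l _; ring.
rewrite H.
transitivity (- ((\sum_l e l * u (ordS l) - \sum_l e l * u l) / h)).
  have -> : \sum_l u l * e l = \sum_l e l * u l by apply: eq_bigr => l _; ring.
  ring.
congr (- _); rewrite -sumrB mulr_suml; apply: eq_bigr => l _; ring.
Qed.

Lemma poinc N' (a : 'I_N'.+1 -> R) : \sum_l a l = 0 ->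
  forall p, `|a p| <= \sum_l `|a (ordS l) - a l|.
Proof.
move=> a0 p.
set TV := \sum_l _.
have TV0 : 0 <= TV by apply: sumr_ge0 => l _.
have Hpq : forall p q : 'I_N'.+1, (q <= p)%N -> `|a p - a q| <= TV.
  move=> {}p q qp.
  pose b m := a (inord m).
  have ep : a p - a q = \sum_(q <= m < p) (b m.+1 - b m).
    by rewrite telescope_sumr // /b !inord_val.
  rewrite ep; apply: le_trans (ler_norm_sum _ _ _) _.
  have -> : TV = \sum_(0 <= m < N'.+1) `|a (ordS (inord m)) - a (inord m)|.
    by rewrite big_mkord; apply: eq_bigr => l _; rewrite inord_val.
  rewrite (@big_cat_nat _ _ _ q 0 N'.+1) //=; last exact: ltnW.
  rewrite (@big_cat_nat _ _ _ p q N'.+1) //=; last exact: ltnW.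
  have -> : \sum_(q <= m < p) `|b m.+1 - b m| =
            \sum_(q <= m < p) `|a (ordS (inord m)) - a (inord m)|.
    apply: eq_big_nat => m /andP[_ mp]; congr (`| a _ - _ |).
    have mN : (m < N'.+1)%N by apply: ltn_trans mp _.
    have mN1 : (m.+1 < N'.+1)%N by apply: leq_ltn_trans mp _.
    apply: val_inj => /=; rewrite !inordK // modn_small //.
  rewrite addrCA lerDl addr_ge0 //; exact: sumr_ge0.
have Hpq' : forall q, `|a p - a q| <= TV.
  move=> q; case: (leqP q p) => qp; first exact: Hpq.
  by rewrite distrC; apply: Hpq; exact: ltnW.
have e : a p *+ N'.+1 = \sum_q (a p - a q).
  by rewrite sumrB a0 subr0 sumr_const card_ord.
rewrite -(ler_pMn2r (ltn0Sn N')) -normrMn e.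
apply: le_trans (ler_norm_sum _ _ _) _.
have -> : TV *+ N'.+1 = \sum_(q < N'.+1) TV by rewrite sumr_const card_ord.
by apply: ler_sum => q _.
Qed.

Lemma cs N (x : 'I_N -> R) : (\sum_l x l) ^+ 2 <= N%:R * \sum_l x l ^+ 2.
Proof.
have H : 2%:R * (\sum_l x l) ^+ 2 <= 2%:R * (N%:R * \sum_l x l ^+ 2).
  rewrite expr2 mulr_suml mulr_sumr.
  have -> : 2%:R * (N%:R * \sum_l x l ^+ 2) =
      \sum_l \sum_m (x l ^+ 2 + x m ^+ 2).
    under [RHS]eq_bigr do rewrite big_split /= sumr_const card_ord.
    rewrite big_split /= sumr_const card_ord.
    by rewrite mulr_natl mulr_natl mulr2n sumrMnl.
  apply: ler_sum => l _; rewrite !mulr_sumr; apply: ler_sum => m _.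
  rewrite -subr_ge0 (_ : _ - _ = (x l - x m) ^+ 2); first exact: sqr_ge0.
  ring.
by rewrite ler_pM2l // in H.
Qed.


Lemma Linf_ge0 k N (f : 'I_k -> 'I_N -> R) : 0 <= Linf f.
Proof.
rewrite /Linf; apply: (big_ind (fun x => 0 <= x)).
- by [].
- by move=> x y hx hy; rewrite le_max hx.
move=> i _; apply: (big_ind (fun x => 0 <= x)).
- by [].
- by move=> x y hx hy; rewrite le_max hx.
by move=> l _; exact: normr_ge0.
Qed.

Lemma Linf_ge k N (f : 'I_k -> 'I_N -> R) i l : `|f i l| <= Linf f.
Proof.
rewrite /Linf (bigD1 i) //= le_max; apply/orP; left.
by rewrite (bigD1 l) //= le_max lexx.
Qed.

Lemma Linf_att k N (f : 'I_k -> 'I_N -> R) :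
  Linf f = 0 \/ exists i l, Linf f = `|f i l|.
Proof.
rewrite /Linf.
apply: (big_ind (fun x => x = 0 \/ exists i l, x = `|f i l|)) => //.
- by left.
- by move=> x y hx hy /=; have [xy|yx] := leP x y.
move=> i _.
apply: (big_ind (fun x => x = 0 \/ exists i l, x = `|f i l|)) => //.
- by left.
- by move=> x y hx hy /=; have [xy|yx] := leP x y.
by move=> l _; right; exists i, l.
Qed.

Lemma energy k N (h : R) (Phi : 'I_N -> 'M[R]_k) (f : 'I_k -> 'I_N -> R) :
  \sum_i \sum_l f i l * LPhi h Phi f i l =
  \sum_l \sum_i \sum_j Phi l i j * Dh h (f j) l * Dh h (f i) l.
Proof.
transitivity (\sum_i \sum_j \sum_l Phi l i j * Dh h (f j) l * Dh h (f i) l).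
  apply: eq_bigr => i _; rewrite /LPhi.
  under eq_bigr => l _ do rewrite mulrN mulr_sumr.
  rewrite sumrN exchange_big /= -sumrN; apply: eq_bigr => j _.
  by rewrite sbp opprK.
under eq_bigr => i _ do rewrite exchange_big.
by rewrite exchange_big.
Qed.

Lemma sum_form k (A : 'M[R]_k) lam (a : 'I_k -> R) : A^T = A ->
  (forall mu, eigenvalue A mu -> lam <= mu) ->
  lam * \sum_i a i ^+ 2 <= \sum_i \sum_j A i j * a j * a i.
Proof.
move=> tA H; have := @quad_ge R _ A lam tA H (\row_i a i).
have sA i j : A j i = A i j by rewrite -{1}tA mxE.
have -> : ((\row_i a i) *m (\row_i a i)^T) 0 0 = \sum_i a i ^+ 2.
  by rewrite mxE; apply: eq_bigr => i _; rewrite !mxE expr2.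
suff -> : ((\row_i a i) *m A *m (\row_i a i)^T) 0 0 =
   \sum_i \sum_j A i j * a j * a i by [].
rewrite mxE; apply: eq_bigr => i _; rewrite !mxE mulr_suml.
by apply: eq_bigr => j _; rewrite !mxE sA; ring.
Qed.

End G.
Arguments sbp {R}.
Arguments poinc {R}.
Arguments cs {R}.
Arguments Linf_ge0 {R k N}.
Arguments Linf_ge {R k N}.
Arguments Linf_att {R k N}.
Arguments energy {R k N}.
Arguments sum_form {R k}.

Theorem lemma3p2 (R : realType) (n : nat) (L : R) :
  (2 <= n)%N -> 0 < L ->
  exists C : R, 0 < C /\
  forall N : nat, (1 <= N)%N ->
  let h := L / N%:R in
  forall (Phi : 'I_N -> 'M[R]_(n.-1)) (lam M : R)
         (phi f : 'I_(n.-1) -> 'I_N -> R),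
    (forall l : 'I_N, sym_posdef (Phi l)) ->
    is_min_eigenvalue Phi lam ->
    0 < lam ->
    mean_zero phi ->
    Linf phi <= M ->
    mean_zero f ->
    LPhi h Phi f = phi ->
    Linf f <= C * M / lam * (Num.sqrt h)^-1 * Num.sqrt (n.-1)%:R.
Proof.
move=> n2 L0.
have k0 : (0 < n.-1)%N by rewrite -subn1 subn_gt0.
exists (L ^+ 2 * Num.sqrt L * Num.sqrt (n.-1)%:R); split.
  by rewrite !mulr_gt0 ?exprn_gt0 ?sqrtr_gt0 ?ltr0n.
case=> [//|N'] _ h Phi lam M phi f Hpd Hmin lam0 phi0 phiM f0 Heq.
set k := n.-1 in Phi phi f Hpd Hmin phi0 phiM f0 Heq k0 *.
have h0 : 0 < h by rewrite /h divr_gt0 // ltr0n.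
have hN : h * N'.+1%:R = L by rewrite /h divfK // pnatr_eq0.
set g := fun i l => Dh h (f i) l.
set F := Linf f.
have F0 : 0 <= F by exact: Linf_ge0.
have M0 : 0 <= M := le_trans (Linf_ge0 phi) phiM.
have phiB i l : `|phi i l| <= M := le_trans (Linf_ge phi i l) phiM.
set E := \sum_l \sum_i g i l ^+ 2.
have E1 : lam * E <= k%:R * N'.+1%:R * F * M.
  rewrite /E mulr_sumr.
  apply: (@le_trans _ _ (\sum_l \sum_i \sum_j Phi l i j * g j l * g i l)).
    apply: ler_sum => l _; apply: sum_form.
      by case: (Hpd l).
    by move=> mu; apply: Hmin.2.
  rewrite /g -energy Heq.
  apply: (@le_trans _ _ (\sum_(i < k) \sum_(l < N'.+1) F * M)).
    apply: ler_sum => i _; apply: ler_sum => l _.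
    apply: le_trans (ler_norm _) _; rewrite normrM.
    apply: ler_pM; [exact: normr_ge0 | exact: normr_ge0 | exact: Linf_ge | exact: phiB].
  under eq_bigr do rewrite sumr_const card_ord.
  rewrite sumr_const card_ord -[_ *+ k]mulr_natr -[_ *+ N'.+1]mulr_natr.
  rewrite le_eqVlt; apply/orP; left; apply/eqP; ring.
have P i p : `|f i p| <= h * \sum_l `|g i l|.
  apply: le_trans (@poinc R N' (f i) (f0 i) p) _.
  rewrite mulr_sumr; apply: ler_sum => l _.
  rewrite /g /Dh normrM normfV (gtr0_norm h0) mulrCA divff ?mulr1 //.
  by rewrite gt_eqF.
have CS i : (\sum_l `|g i l|) ^+ 2 <= N'.+1%:R * E.
  apply: le_trans (@cs R N'.+1 _) _.
  rewrite ler_pM2l ?ltr0n //; apply: ler_sum => l _.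
  rewrite real_normK ?num_real // (bigD1 i) //= lerDl.
  by apply: sumr_ge0 => j _; exact: sqr_ge0.
have Key i p : lam * `|f i p| ^+ 2 <= L ^+ 2 * k%:R * M * F.
  have H1 : `|f i p| ^+ 2 <= h ^+ 2 * (N'.+1%:R * E).
    apply: (@le_trans _ _ ((h * \sum_l `|g i l|) ^+ 2)).
      rewrite !expr2; apply: ler_pM => //; exact: P.
    rewrite exprMn ler_pM2l ?exprn_gt0 //; exact: CS.
  apply: (@le_trans _ _ (lam * (h ^+ 2 * (N'.+1%:R * E)))).
    by rewrite ler_pM2l.
  apply: (@le_trans _ _ (h ^+ 2 * N'.+1%:R * (k%:R * N'.+1%:R * F * M))).
    rewrite (_ : lam * _ = h ^+ 2 * N'.+1%:R * (lam * E)); last by ring.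
    by rewrite ler_pM2l // mulr_gt0 ?exprn_gt0 ?ltr0n.
  rewrite -hN le_eqVlt; apply/orP; left; apply/eqP; ring.
have FB : F <= L ^+ 2 * k%:R * M / lam.
  have c0 : 0 <= L ^+ 2 * k%:R * M / lam.
    by rewrite divr_ge0 ?(ltW lam0) // !mulr_ge0 ?exprn_ge0 ?ler0n // ltW.
  case: (Linf_att f) => [F00 | [i [p Fe]]].
    by rewrite -/F in F00; rewrite F00.
  rewrite -/F in Fe.
  have K := Key i p; rewrite -Fe in K.
  have [Fz|Fp] := eqVneq F 0; first by rewrite Fz.
  have Fpos : 0 < F by rewrite lt_def Fp F0.
  rewrite ler_pdivlMr // -(ler_pM2r Fpos).
  rewrite (_ : F * lam * F = lam * F ^+ 2); first exact: K.
  ring.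
apply: le_trans FB _.
have sk : Num.sqrt k%:R * Num.sqrt k%:R = k%:R :> R.
  by rewrite -expr2 sqr_sqrtr // ler0n.
have sh0 : 0 < Num.sqrt h by rewrite sqrtr_gt0.
have -> : L ^+ 2 * Num.sqrt L * Num.sqrt k%:R * M / lam * (Num.sqrt h)^-1 *
          Num.sqrt k%:R = (L ^+ 2 * k%:R * M / lam) * (Num.sqrt L / Num.sqrt h).
  rewrite -[in RHS]sk; field.
  by rewrite gt_eqF // gt_eqF.
apply: ler_peMr.
  by rewrite divr_ge0 ?(ltW lam0) // !mulr_ge0 ?exprn_ge0 ?ler0n // ltW.
rewrite ler_pdivlMr // mul1r ler_sqrt ?(ltW L0) //.
rewrite /h ler_pdivrMr ?ltr0n // ler_peMr ?(ltW L0) //.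
by rewrite ler1n.
Qed.
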